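(* Fix real numbers $r_1,r_2>0$ and integers $i_1,i_2>0$ with $\gcd(i_1,i_2)=1$. Then for all sufficiently large $D$ there exist integers $d_1,d_2>0$ with $\gcd(d_1,d_2)=1$ and $D=i_1d_1+i_2d_2$ such that \[ \Big|d_1-\frac{r_1D}{i_1r_1+i_2r_2}\Big|\le i_2J(D)\quad\text{and}\quad\Big|d_2-\frac{r_2D}{i_1r_1+i_2r_2}\Big|\le i_1J(D). \]
   Context: $J(D)$ is Jacobsthal's function: the minimal integer such that every interval of this length contains an integer coprime to $D$. *)

(* Defs.v *)
From Stdlib Require Import Reals ZArith.
Open Scope R_scope.

Definition covers (D : Z) (m : nat) : Prop :=
  forall a : Z, exists k : nat, (k < m)%nat /\ Z.gcd (a + Z.of_nat k) D = 1%Z.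

Definition is_jacobsthal (D : Z) (J : nat) : Prop :=
  covers D J /\ forall m : nat, covers D m -> (J <= m)%nat.

(* Main.v *)
Require Import Defs.
From Stdlib Require Import Reals ZArith.
Open Scope R_scope.
From Stdlib Require Import Lia Psatz List Znumtheory.
Import ListNotations.
Open Scope Z_scope.

Definition good (l : list Z) (x : Z) : bool :=
  forallb (fun q => negb (x mod q =? 0)) l.

Fixpoint cnt (l : list Z) (a : Z) (L : nat) : Z :=
  match L with
  | O => 0
  | S L' => cnt l a L' + (if good l (a + Z.of_nat L') then 1 else 0)
  end.

Definition cl (p z : Z) : Z := - ((- z) / p).

Lemma cl_spec p z : 0 < p -> p * cl p z - p < z <= p * cl p z.
Proof.
  intro Hp. unfold cl.
  pose proof (Z.div_mod (-z) p ltac:(lia)).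
  pose proof (Z.mod_pos_bound (-z) p Hp). nia.
Qed.

Lemma cl_uniq p z m : 0 < p -> p * m - p < z <= p * m -> cl p z = m.
Proof.
  intros Hp H. pose proof (cl_spec p z Hp). nia.
Qed.

Lemma cl_succ p z : 1 < p ->
  cl p (z + 1) = cl p z + (if z mod p =? 0 then 1 else 0).
Proof.
  intro Hp. pose proof (cl_spec p z ltac:(lia)).
  pose proof (Z.div_mod z p ltac:(lia)).
  pose proof (Z.mod_pos_bound z p ltac:(lia)).
  destruct (Z.eqb_spec (z mod p) 0) as [E|E]; apply cl_uniq; try lia.
  - assert (z = p * (z / p)) by lia.
    assert (cl p z = z / p) by (apply cl_uniq; lia). nia.
  - assert (z <> p * cl p z).
    { intro Hz. apply E. rewrite Hz. rewrite Z.mul_comm. apply Z.mod_mul. lia. }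
    lia.
Qed.

Lemma cl_mono p z w : 0 < p -> z <= w -> cl p z <= cl p w.
Proof.
  intros Hp H. pose proof (cl_spec p z Hp). pose proof (cl_spec p w Hp). nia.
Qed.

Lemma forallb_ext_in' (f g : Z -> bool) l :
  (forall x, In x l -> f x = g x) -> forallb f l = forallb g l.
Proof.
  induction l; simpl; intros H; auto. rewrite H by auto. rewrite IHl; auto.
Qed.

Lemma good_mul l p y : prime p -> ~ In p l -> (forall q, In q l -> prime q) ->
  good l (p * y) = good l y.
Proof.
  intros Hp Hn Hl. unfold good. apply forallb_ext_in'. intros q Hq.
  pose proof (prime_ge_2 q (Hl q Hq)) as Hq2.
  f_equal.
  destruct (Z.eqb_spec (p*y mod q) 0) as [E|E]; destruct (Z.eqb_spec (y mod q) 0) as [E'|E']; auto.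
  - exfalso. apply Zmod_divide in E; [|lia].
    destruct (prime_mult q (Hl q Hq) p y E) as [D|D].
    + apply prime_div_prime in D; auto. subst; auto.
    + apply E'. apply Zdivide_mod. auto.
  - exfalso. apply E. apply Zmod_divide in E'; [|lia]. apply Zdivide_mod.
    apply Z.divide_mul_r. auto.
Qed.

Lemma cnt_split l p a : prime p -> ~ In p l -> (forall q, In q l -> prime q) ->
  forall L, cnt l a L = cnt (p :: l) a L
     + cnt l (cl p a) (Z.to_nat (cl p (a + Z.of_nat L) - cl p a)).
Proof.
  intros Hp Hn Hl. pose proof (prime_ge_2 p Hp) as Hp2.
  induction L as [|L IH].
  - simpl. rewrite Z.add_0_r, Z.sub_diag. reflexivity.
  - rewrite Nat2Z.inj_succ. rewrite <- Z.add_1_r, Z.add_assoc, cl_succ by lia.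
    pose proof (cl_mono p a (a + Z.of_nat L) ltac:(lia) ltac:(lia)).
    simpl cnt. rewrite IH. unfold good at 2; simpl forallb; fold (good l (a + Z.of_nat L)).
    destruct (Z.eqb_spec ((a + Z.of_nat L) mod p) 0) as [E|E].
    + simpl.
      replace (Z.to_nat (cl p (a + Z.of_nat L) + 1 - cl p a))
        with (S (Z.to_nat (cl p (a + Z.of_nat L) - cl p a))) by lia.
      simpl cnt.
      rewrite Z2Nat.id by lia.
      replace (cl p a + (cl p (a + Z.of_nat L) - cl p a)) with (cl p (a + Z.of_nat L)) by lia.
      assert (Hx : a + Z.of_nat L = p * cl p (a + Z.of_nat L)).
      { pose proof (Z.div_mod (a + Z.of_nat L) p ltac:(lia)).
        rewrite (cl_uniq p (a + Z.of_nat L) ((a + Z.of_nat L)/p)); lia. }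
      assert (Hg : good l (a + Z.of_nat L) = good l (cl p (a + Z.of_nat L))).
      { rewrite Hx at 1. apply good_mul; auto. }
      rewrite Hg. lia.
    + simpl. rewrite Z.add_0_r. lia.
Qed.

Definition PP (l : list Z) : Z := fold_right Z.mul 1 l.
Definition FF (l : list Z) : Z := fold_right (fun p acc => (p - 1) * acc) 1 l.
Definition EE (l : list Z) : Z := 2 ^ Z.of_nat (length l) - 1.

Lemma cnt_nil a L : cnt [] a L = Z.of_nat L.
Proof. induction L; simpl; auto. rewrite IHL. lia. Qed.

Lemma PF_pos l : (forall q, In q l -> prime q) -> 0 < PP l /\ 0 <= FF l /\ FF l <= PP l /\ 0 <= EE l.
Proof.
  induction l as [|p l IH]; intros Hl.
  - unfold PP, FF, EE; simpl; lia.
  - destruct IH as (H1 & H2 & H3 & H4). { intros; apply Hl; simpl; auto. }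
    pose proof (prime_ge_2 p (Hl p (or_introl eq_refl))).
    unfold PP, FF, EE in *; cbn [fold_right length]. rewrite Nat2Z.inj_succ, Z.pow_succ_r by lia. nia.
Qed.

Lemma cnt_bound l : NoDup l -> (forall q, In q l -> prime q) ->
  forall a L, Z.of_nat L * FF l - EE l * PP l <= cnt l a L * PP l
              <= Z.of_nat L * FF l + EE l * PP l.
Proof.
  induction l as [|p l IH]; intros Hnd Hl a L.
  - rewrite cnt_nil. unfold PP, FF, EE; simpl; lia.
  - inversion Hnd as [|? ? Hn Hnd']; subst.
    assert (Hl' : forall q, In q l -> prime q) by (intros; apply Hl; simpl; auto).
    assert (Hp : prime p) by (apply Hl; simpl; auto).
    pose proof (prime_ge_2 p Hp).
    destruct (PF_pos l Hl') as (H1 & H2 & H3 & H4).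
    pose proof (cnt_split l p a Hp Hn Hl' L) as Hs.
    set (M := Z.to_nat (cl p (a + Z.of_nat L) - cl p a)) in Hs.
    pose proof (cl_mono p a (a + Z.of_nat L) ltac:(lia) ltac:(lia)).
    pose proof (cl_spec p a ltac:(lia)). pose proof (cl_spec p (a + Z.of_nat L) ltac:(lia)).
    assert (HM : Z.of_nat M = cl p (a + Z.of_nat L) - cl p a) by (unfold M; lia).
    assert (HpM1 : p * Z.of_nat M < Z.of_nat L + p) by nia.
    assert (HpM2 : Z.of_nat L - p < p * Z.of_nat M) by nia.
    destruct (IH Hnd' Hl' a L) as [A1 A2].
    destruct (IH Hnd' Hl' (cl p a) M) as [B1 B2].
    set (N := cnt l a L) in *. set (N' := cnt l (cl p a) M) in *.
    assert (Hc : cnt (p :: l) a L = N - N') by lia.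
    rewrite Hc.
    unfold PP, FF, EE in *; cbn [fold_right length].
    rewrite Nat2Z.inj_succ, Z.pow_succ_r by lia.
    fold (PP l) (FF l) in *.
    set (e := 2 ^ Z.of_nat (length l)) in *.
    set (P := PP l) in *. set (F := FF l) in *. set (Lz := Z.of_nat L) in *.
    set (Mz := Z.of_nat M) in *.
    assert (X1 : p * (Lz * F - (e - 1) * P) <= p * (N * P)) by nia.
    assert (X2 : p * (N * P) <= p * (Lz * F + (e - 1) * P)) by nia.
    assert (X3 : p * (Mz * F - (e - 1) * P) <= p * (N' * P)) by nia.
    assert (X4 : p * (N' * P) <= p * (Mz * F + (e - 1) * P)) by nia.
    assert (X5 : (p * Mz) * F <= (Lz + p) * F) by nia.
    assert (X6 : (Lz - p) * F <= (p * Mz) * F) by nia.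
    split; nia.
Qed.

Lemma twoF l : (forall q, In q l -> prime q) -> PP l <= 2 ^ Z.of_nat (length l) * FF l.
Proof.
  induction l as [|p l IH]; intros Hl.
  - unfold PP, FF; simpl; lia.
  - assert (Hl' : forall q, In q l -> prime q) by (intros; apply Hl; simpl; auto).
    pose proof (prime_ge_2 p (Hl p (or_introl eq_refl))).
    destruct (PF_pos l Hl') as (H1 & H2 & H3 & H4). specialize (IH Hl').
    unfold PP, FF, EE in *; cbn [fold_right length].
    rewrite Nat2Z.inj_succ, Z.pow_succ_r by lia.
    set (e := 2 ^ Z.of_nat (length l)) in *. nia.
Qed.

Lemma cnt_pos_ex l a L : 0 < cnt l a L -> exists k, (k < L)%nat /\ good l (a + Z.of_nat k) = true.
Proof.
  induction L as [|L IH]; simpl; intros H; [lia|].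
  destruct (good l (a + Z.of_nat L)) eqn:E.
  - exists L; split; auto.
  - destruct IH as [k [Hk Hg]]; [lia|]. exists k; split; auto.
Qed.

Lemma cnt_good l : NoDup l -> (forall q, In q l -> prime q) ->
  forall a, exists k, (k < 4 ^ length l)%nat /\ good l (a + Z.of_nat k) = true.
Proof.
  intros Hnd Hl a. apply cnt_pos_ex.
  destruct (cnt_bound l Hnd Hl a (4 ^ length l)) as [H _].
  destruct (PF_pos l Hl) as (H1 & H2 & H3 & H4).
  pose proof (twoF l Hl).
  rewrite Nat2Z.inj_pow in H.
  replace (Z.of_nat 4) with (2 * 2) in H by reflexivity.
  rewrite Z.pow_mul_l in H.
  unfold EE in H.
  set (e := 2 ^ Z.of_nat (length l)) in *. nia.
Qed.

Fixpoint pl (D : Z) (n : nat) : list Z :=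
  match n with
  | O => []
  | S n' => if prime_dec (Z.of_nat n') then
              if Zdivide_dec (Z.of_nat n') D then Z.of_nat n' :: pl D n' else pl D n'
            else pl D n'
  end.

Lemma pl_In D n p : In p (pl D n) <-> (0 <= p < Z.of_nat n /\ prime p /\ (p | D)).
Proof.
  induction n as [|n IH]; cbn [pl].
  - simpl; split; [tauto| lia].
  - rewrite Nat2Z.inj_succ. destruct (prime_dec (Z.of_nat n)) as [P|P];
      [destruct (Zdivide_dec (Z.of_nat n) D) as [Q|Q]|]; simpl; rewrite ?IH; split.
    + intros [<-|(H1&H2&H3)]; (split; [lia|split; auto]).
    + intros (H1&H2&H3). assert (p = Z.of_nat n \/ p < Z.of_nat n) as [->|] by lia; [left; auto|right; (split; [lia|split; auto])].
    + intros (H1&H2&H3); (split; [lia|split; auto]).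
    + intros (H1&H2&H3). assert (p = Z.of_nat n \/ p < Z.of_nat n) as [->|] by lia; [contradiction|(split; [lia|split; auto])].
    + intros (H1&H2&H3); (split; [lia|split; auto]).
    + intros (H1&H2&H3). assert (p = Z.of_nat n \/ p < Z.of_nat n) as [->|] by lia; [contradiction|(split; [lia|split; auto])].
Qed.

Lemma pl_NoDup D n : NoDup (pl D n).
Proof.
  induction n as [|n IH]; simpl. constructor.
  destruct (prime_dec (Z.of_nat n)); [destruct (Zdivide_dec (Z.of_nat n) D)|]; auto.
  constructor; auto. rewrite pl_In. lia.
Qed.

Lemma prime_div_ex : forall N n, 1 < n <= Z.of_nat N -> exists p, prime p /\ (p | n).
Proof.
  induction N as [|N IH]; intros n Hn; [lia|].
  destruct (prime_dec n) as [P|P].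
  - exists n; split; auto. apply Z.divide_refl.
  - destruct (not_prime_divide n ltac:(lia) P) as [m [Hm Hd]].
    destruct (IH m ltac:(lia)) as [q [Hq Hqd]].
    exists q; split; auto. eapply Z.divide_trans; eauto.
Qed.

Lemma good_gcd D x : 0 < D -> good (pl D (S (Z.to_nat D))) x = true -> Z.gcd x D = 1.
Proof.
  intros HD Hg.
  pose proof (Z.gcd_nonneg x D).
  assert (Z.gcd x D <> 0). { intro E. apply Z.gcd_eq_0 in E. lia. }
  destruct (Z.eq_dec (Z.gcd x D) 1) as [|Hne]; auto. exfalso.
  pose proof (Z.divide_pos_le _ _ HD (Z.gcd_divide_r x D)).
  destruct (prime_div_ex (Z.to_nat D) (Z.gcd x D) ltac:(lia)) as [q [Hq Hqd]].
  assert (Hqx : (q | x)) by (eapply Z.divide_trans; [exact Hqd| apply Z.gcd_divide_l]).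
  assert (HqD : (q | D)) by (eapply Z.divide_trans; [exact Hqd| apply Z.gcd_divide_r]).
  pose proof (prime_ge_2 q Hq).
  pose proof (Z.divide_pos_le _ _ HD HqD).
  assert (Hin : In q (pl D (S (Z.to_nat D)))) by (apply pl_In; split; [lia|split; auto]).
  unfold good in Hg. rewrite forallb_forall in Hg. specialize (Hg q Hin).
  rewrite (Zdivide_mod x q Hqx) in Hg. discriminate.
Qed.

Lemma PP_div D l : NoDup l -> (forall q, In q l -> prime q /\ (q | D)) -> (PP l | D).
Proof.
  induction l as [|p l IH]; intros Hnd Hl.
  - unfold PP; simpl. apply Z.divide_1_l.
  - inversion Hnd; subst. unfold PP; cbn [fold_right]. fold (PP l).
    destruct (Hl p (or_introl eq_refl)) as [Hp HpD].
    assert (Hl' : forall q, In q l -> prime q /\ (q | D)) by (intros; apply Hl; simpl; auto).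
    specialize (IH H2 Hl').
    destruct IH as [k Hk].
    rewrite Hk in HpD.
    assert (~ (p | PP l)).
    { clear -Hl' H1 Hp. induction l as [|q l IHl]; intro Hd.
      - unfold PP in Hd; simpl in Hd. apply Z.divide_1_r in Hd. pose proof (prime_ge_2 p Hp). lia.
      - unfold PP in Hd; cbn [fold_right] in Hd. fold (PP l) in Hd.
        destruct (prime_mult p Hp _ _ Hd) as [E|E].
        + apply prime_div_prime in E; auto. subst. apply H1; simpl; auto.
          apply Hl'; simpl; auto.
        + apply IHl; [intro; apply H1; simpl; auto | intros; apply Hl'; simpl; auto | exact E]. }
    destruct (prime_mult p Hp _ _ HpD) as [E|E]; [|contradiction].
    destruct E as [j Hj]. exists j. rewrite Hk, Hj. ring.
Qed.

Lemma small_bound l : NoDup l -> (forall q, In q l -> 2 <= q) ->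
  16 ^ Z.of_nat (length l) <= 16 ^ 14 * PP l.
Proof.
  intros Hnd Hl.
  assert (G : forall l, (forall q, In q l -> 2 <= q) ->
     16 ^ Z.of_nat (length l) <= 16 ^ Z.of_nat (length (filter (fun q => q <? 16) l)) * PP l).
  { clear. induction l as [|p l IH]; intros Hl.
    - unfold PP; simpl. lia.
    - assert (Hl' : forall q, In q l -> 2 <= q) by (intros; apply Hl; simpl; auto).
      specialize (IH Hl'). pose proof (Hl p (or_introl eq_refl)).
      assert (0 < PP l).
      { clear -Hl'. induction l; unfold PP in *; simpl; [lia|].
        pose proof (Hl' a (or_introl eq_refl)). assert (0 < fold_right Z.mul 1 l) by (apply IHl; intros; apply Hl'; simpl; auto). nia. }
      unfold PP in *; cbn [fold_right length filter]. fold (PP l) in *.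
      rewrite Nat2Z.inj_succ, Z.pow_succ_r by lia.
      set (s := length (filter (fun q => q <? 16) l)) in *.
      assert (0 <= 16 ^ Z.of_nat s) by (apply Z.pow_nonneg; lia).
      destruct (Z.ltb_spec p 16); cbn [length].
      + rewrite Nat2Z.inj_succ, Z.pow_succ_r by lia. fold s. nia.
      + fold s. nia. }
  eapply Z.le_trans; [apply G; auto|].
  assert (0 < PP l).
  { clear -Hl. induction l; unfold PP in *; simpl; [lia|].
    pose proof (Hl a (or_introl eq_refl)). assert (0 < fold_right Z.mul 1 l) by (apply IHl; intros; apply Hl; simpl; auto). nia. }
  apply Z.mul_le_mono_nonneg_r; [lia|]. apply Z.pow_le_mono_r; [lia|].
  assert (length (filter (fun q => (q <? 16)%Z) l) <= length (map Z.of_nat (seq 2 14)))%nat.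
  { apply NoDup_incl_length. apply NoDup_filter; auto.
    intros x Hx. apply filter_In in Hx. destruct Hx as [Hx1 Hx2]. apply Z.ltb_lt in Hx2.
    pose proof (Hl x Hx1). apply in_map_iff. exists (Z.to_nat x). split; [lia|].
    apply in_seq. lia. }
  rewrite length_map, length_seq in H0. lia.
Qed.

Lemma jbound (D : Z) (J : nat) : (0 < D)%Z -> is_jacobsthal D J ->
  (Z.of_nat J * Z.of_nat J <= 16 ^ 14 * D)%Z.
Proof.
  intros HD [_ Hmin].
  set (l := pl D (S (Z.to_nat D))).
  assert (Hnd : NoDup l) by apply pl_NoDup.
  assert (Hl : forall q, In q l -> prime q /\ (q | D)).
  { intros q Hq. apply pl_In in Hq. tauto. }
  assert (Hcov : covers D (4 ^ length l)).
  { intros a. destruct (cnt_good l Hnd (fun q Hq => proj1 (Hl q Hq)) a) as [k [Hk Hg]].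
    exists k. split; auto. apply good_gcd; auto. }
  specialize (Hmin _ Hcov).
  assert (HJ : (Z.of_nat J <= 4 ^ Z.of_nat (length l))%Z).
  { replace (4 ^ Z.of_nat (length l))%Z with (Z.of_nat (4 ^ length l)).
    - lia.
    - rewrite Nat2Z.inj_pow. reflexivity. }
  assert (H16 := small_bound l Hnd (fun q Hq => prime_ge_2 q (proj1 (Hl q Hq)))).
  assert (HP := PP_div D l Hnd Hl).
  assert (HPpos : (0 < PP l)%Z).
  { destruct (PF_pos l (fun q Hq => proj1 (Hl q Hq))) as [X _]; exact X. }
  pose proof (Z.divide_pos_le _ _ HD HP).
  assert (E : (4 ^ Z.of_nat (length l) * 4 ^ Z.of_nat (length l) = 16 ^ Z.of_nat (length l))%Z).
  { rewrite <- Z.pow_mul_l. reflexivity. }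
  assert (0 <= Z.of_nat J)%Z by lia.
  nia.
Qed.



Close Scope Z_scope.
Open Scope R_scope.

Theorem lemma3p3 (r1 r2 : R) (i1 i2 : Z) :
  0 < r1 -> 0 < r2 -> (0 < i1)%Z -> (0 < i2)%Z -> Z.gcd i1 i2 = 1%Z ->
  exists D0 : Z, forall (D : Z) (J : nat), (D0 <= D)%Z -> is_jacobsthal D J ->
    exists d1 d2 : Z,
      (0 < d1)%Z /\ (0 < d2)%Z /\ Z.gcd d1 d2 = 1%Z /\
      D = (i1 * d1 + i2 * d2)%Z /\
      Rabs (IZR d1 - r1 * IZR D / (IZR i1 * r1 + IZR i2 * r2)) <= IZR i2 * INR J /\
      Rabs (IZR d2 - r2 * IZR D / (IZR i1 * r1 + IZR i2 * r2)) <= IZR i1 * INR J.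
Proof.
  intros Hr1 Hr2 Hi1 Hi2 Hg.
  assert (Ii1 : 0 < IZR i1) by (apply IZR_lt; lia).
  assert (Ii2 : 0 < IZR i2) by (apply IZR_lt; lia).
  set (S := IZR i1 * r1 + IZR i2 * r2).
  assert (HS : 0 < S) by (unfold S; nra).
  set (q := S * IZR i2 / r1).
  assert (Hq : 0 < q) by (unfold q; apply Rdiv_lt_0_compat; nra).
  set (A := IZR (16 ^ 14)).
  exists (Z.max 1 (up (A * q * q))).
  intros D J HD0 HJac.
  assert (HD : (0 < D)%Z) by lia.
  assert (IHD : 0 < IZR D) by (apply IZR_lt; lia).
  assert (HDbig : A * q * q < IZR D).
  { destruct (archimed (A * q * q)) as [X _].
    apply Rlt_le_trans with (IZR (up (A*q*q))); [lra|]. apply IZR_le. lia. }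
  pose proof (jbound D J HD HJac) as HJb.
  set (j := INR J).
  assert (Hj0 : 0 <= j) by apply pos_INR.
  assert (HJR : j * j <= A * IZR D).
  { unfold j, A. rewrite INR_IZR_INZ, <- !mult_IZR. apply IZR_le. exact HJb. }
  set (x1 := r1 * IZR D / S).
  set (x2 := r2 * IZR D / S).
  assert (Hx1 : 0 < x1) by (unfold x1; apply Rdiv_lt_0_compat; nra).
  assert (Hx2 : 0 < x2) by (unfold x2; apply Rdiv_lt_0_compat; nra).
  assert (Hx12 : IZR i1 * x1 + IZR i2 * x2 = IZR D) by (unfold x1, x2, S in *; field; lra).
  assert (Hjq : j * q < IZR D).
  { assert ((j * q) * (j * q) < IZR D * IZR D).
    { apply Rle_lt_trans with (A * IZR D * (q * q)).
      - replace ((j*q)*(j*q)) with ((j*j)*(q*q)) by ring.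
        apply Rmult_le_compat_r; nra.
      - replace (A * IZR D * (q * q)) with ((A * q * q) * IZR D) by ring.
        apply Rmult_lt_compat_r; lra. }
    nra. }
  assert (Hkey : IZR i2 * j <= x1).
  { unfold x1, q in *.
    assert (j * (S * IZR i2) < IZR D * r1).
    { apply Rmult_lt_reg_r with (/ r1). apply Rinv_0_lt_compat; lra.
      replace (IZR D * r1 * / r1) with (IZR D) by (field; lra).
      replace (j * (S * IZR i2) * / r1) with (j * (S * IZR i2 / r1)) by (field; lra). lra. }
    apply Rmult_le_reg_r with S; auto.
    replace (r1 * IZR D / S * S) with (IZR D * r1) by (field; lra). nra. }
  assert (Hgcd : Zis_gcd i1 i2 1) by (rewrite <- Hg; apply Zgcd_is_gcd).
  destruct (Zis_gcd_bezout _ _ _ Hgcd) as [u v Huv].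
  set (y := (x1 - IZR i2 * j - IZR (u * D)) / IZR i2).
  set (a0 := up y).
  destruct (proj1 HJac a0) as [k [Hk Hgk]].
  set (t := (a0 + Z.of_nat k)%Z) in *.
  destruct (archimed y) as [Ha1 Ha2]. fold a0 in Ha1, Ha2.
  assert (Hkj : INR k + 1 <= j).
  { unfold j. rewrite <- S_INR. apply le_INR. lia. }
  assert (Ht1 : y < IZR t).
  { unfold t. rewrite plus_IZR, <- INR_IZR_INZ. pose proof (pos_INR k). lra. }
  assert (Ht2 : IZR t <= y + j).
  { unfold t. rewrite plus_IZR, <- INR_IZR_INZ. lra. }
  exists (u * D + i2 * t)%Z, (v * D - i1 * t)%Z.
  assert (Hd1 : IZR (u * D + i2 * t) = IZR (u * D) + IZR i2 * IZR t) by (rewrite plus_IZR, (mult_IZR i2 t); ring).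
  assert (Hy : IZR i2 * y = x1 - IZR i2 * j - IZR (u * D)) by (unfold y; field; lra).
  assert (Hd1a : x1 - IZR i2 * j < IZR (u * D + i2 * t)).
  { rewrite Hd1. assert (IZR i2 * y < IZR i2 * IZR t) by (apply Rmult_lt_compat_l; lra). lra. }
  assert (Hd1b : IZR (u * D + i2 * t) <= x1).
  { rewrite Hd1. assert (IZR i2 * IZR t <= IZR i2 * (y + j)) by (apply Rmult_le_compat_l; lra). lra. }
  assert (HDeq : D = (i1 * (u * D + i2 * t) + i2 * (v * D - i1 * t))%Z).
  { transitivity (D * (u * i1 + v * i2))%Z; [rewrite Huv; ring| ring]. }
  assert (HDR : IZR i1 * IZR (u * D + i2 * t) + IZR i2 * IZR (v * D - i1 * t) = IZR D).
  { rewrite <- !mult_IZR, <- plus_IZR, <- HDeq. reflexivity. }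
  set (d1 := (u * D + i2 * t)%Z) in *. set (d2 := (v * D - i1 * t)%Z) in *.
  assert (Hd2e : IZR i2 * (IZR d2 - x2) = IZR i1 * (x1 - IZR d1)) by lra.
  assert (Hd2a : 0 <= IZR d2 - x2).
  { assert (0 <= IZR i2 * (IZR d2 - x2)) by (rewrite Hd2e; nra). nra. }
  assert (Hd2b : IZR d2 - x2 <= IZR i1 * j).
  { assert (IZR i2 * (IZR d2 - x2) <= IZR i2 * (IZR i1 * j)) by (rewrite Hd2e; nra). nra. }
  split; [apply lt_IZR; lra|].
  split; [apply lt_IZR; lra|].
  split.
  { assert (Hlin : (v * d1 - u * d2 = t * (u * i1 + v * i2))%Z) by (unfold d1, d2; ring).
    rewrite Huv, Z.mul_1_r in Hlin.
    set (g := Z.gcd d1 d2).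
    assert (Hg1 : (g | d1)%Z) by apply Z.gcd_divide_l.
    assert (Hg2 : (g | d2)%Z) by apply Z.gcd_divide_r.
    assert (Hgt : (g | t)%Z).
    { rewrite <- Hlin. apply Z.divide_sub_r; apply Z.divide_mul_r; auto. }
    assert (HgD : (g | D)%Z).
    { rewrite HDeq. apply Z.divide_add_r; apply Z.divide_mul_r; auto. }
    assert (H1 : (g | 1)%Z) by (rewrite <- Hgk; apply Z.gcd_greatest; auto).
    pose proof (Z.gcd_nonneg d1 d2).
    apply Z.divide_1_r in H1. fold g. lia. }
  split; [exact HDeq|].
  fold S. fold x1 x2.
  split; apply Rabs_le; lra.
Qed.
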